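(* Let $q$ be a prime power and let $m>a\geq 0$, $n>b\geq 0$, $h\geq 0$ be integers with $h\leq (m-a)(n-b)-\max\{m-a,n-b\}$. Let $\mathcal{C}_{\mathsf{out}}\in\mathbb{C}^{\mathsf{MR}}_{m\times n}(a,b,0)$ be an $[mn,(m-a)(n-b)]$ code over $\mathbb{F}_q$ with generator matrix $\mathbf{G}_{\mathsf{out}}\in\mathbb{F}_q^{(m-a)(n-b)\times mn}$. Let $s\geq (m-a)(n-b)$, let $\mathbf{g}\in\mathbb{F}_{q^s}^{(m-a)(n-b)}$ have entries that are linearly independent over $\mathbb{F}_q$, and let $\mathbf{G}_{\mathsf{in}}$ be the generator matrix (as in the definition below) of the Gabidulin code $\mathcal{C}_{\mathsf{in}}=\mathsf{Gab}\big((m-a)(n-b),(m-a)(n-b)-h,\mathbf{g}\big)$ over $\mathbb{F}_{q^s}$. Then the code over $\mathbb{F}_{q^s}$ spanned by the rows of $\mathbf{G}_{\mathsf{in}}\cdot\mathbf{G}_{\mathsf{out}}$ corrects every erasure pattern in $$\{\mathcal{E}'\cup\mathcal{I}\ \mid\ \mathcal{E}'\in\mathbb{E}^{\max}_{m\times n}(a,b,0),\ \mathcal{I}\subset([m]\times[n])\setminus\mathcal{E}',\ |\mathcal{I}|=h\}.$$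
   Context: Positions of vectors in $\mathbb{F}^{mn}$ are identified with the grid $[m]\times[n]$, where $[k]=\{1,\dots,k\}$. For linear codes $\mathcal{C}_1\subseteq\mathbb{F}^m$, $\mathcal{C}_2\subseteq\mathbb{F}^n$ with generator matrices $\mathbf{G}_1,\mathbf{G}_2$, $\mathcal{C}_1\otimes\mathcal{C}_2$ is the row span of the Kronecker product $\mathbf{G}_1\otimes\mathbf{G}_2$ (the $m\times n$ arrays with all columns in $\mathcal{C}_1$ and all rows in $\mathcal{C}_2$). A code for the topology $T_{m\times n}(a,b,h)$ is a linear code over a finite field $\mathbb{F}$ with a parity-check matrix $\begin{pmatrix}\mathbf{H}_{\mathsf{local}}\\ \mathbf{H}_{\mathsf{global}}\end{pmatrix}$, where $\mathbf{H}_{\mathsf{local}}$ is a parity-check matrix of $\mathcal{C}_{\mathsf{col}}\otimes\mathcal{C}_{\mathsf{row}}$ for some linear $[m,\geq m-a]$ code $\mathcal{C}_{\mathsf{col}}$ and $[n,\geq n-b]$ code $\mathcal{C}_{\mathsf{row}}$ over $\mathbb{F}$, and $\mathbf{H}_{\mathsf{global}}$ is an arbitrary $h\times mn$ matrix over $\mathbb{F}$; $\mathbb{C}_{m\times n}(a,b,h)$ denotes the set of all such codes. A code corrects an erasure pattern $\mathcal{E}\subseteq[m]\times[n]$ if no two distinct codewords agree on all positions outside $\mathcal{E}$. $\mathcal{E}$ is correctable in $T_{m\times n}(a,b,h)$ if some code in $\mathbb{C}_{m\times n}(a,b,h)$ corrects it; $\mathbb{E}_{m\times n}(a,b,h)$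 is the set of such patterns and $\mathbb{E}^{\max}_{m\times n}(a,b,h)$ the set of those not properly contained in another correctable pattern. A code in $\mathbb{C}_{m\times n}(a,b,h)$ is maximally recoverable (MR) if it corrects every pattern in $\mathbb{E}_{m\times n}(a,b,h)$; $\mathbb{C}^{\mathsf{MR}}_{m\times n}(a,b,h)$ is the set of MR codes. Gabidulin code: for $\mathbf{g}=(g_1,\dots,g_N)\in\mathbb{F}_{q^s}^N$ with $g_i$ linearly independent over $\mathbb{F}_q$, $\mathsf{Gab}(N,k,\mathbf{g})$ is the $[N,k]$ code over $\mathbb{F}_{q^s}$ spanned by the rows of the $k\times N$ matrix whose $(i,j)$ entry is $g_j^{q^{i-1}}$. *)

(* Defs.v *)
From HB Require Import structures.
From mathcomp Require Import all_boot all_order all_algebra all_field.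
From mathcomp Require Import mxtens.
Set Implicit Arguments. Unset Strict Implicit. Unset Printing Implicit Defensive.
Import GRing.Theory.
Local Open Scope ring_scope.

(* Positions of F^(mn) are identified with [m] x [n] via (i,j) |-> i*n + j,
   the same convention as the Kronecker product tensmx (mxtens). *)
Definition pos (m n : nat) (i : 'I_m) (j : 'I_n) : 'I_(m * n) :=
  mxtens_index (i, j).

Definition codeword (K : fieldType) (k N : nat) (G : 'M[K]_(k, N)) (x : 'rV[K]_N) :=
  (x <= G)%MS.

Definition corrects (K : fieldType) (m n k : nat) (G : 'M[K]_(k, m * n))
    (E : {set 'I_m * 'I_n}) : Prop :=
  forall x y : 'rV[K]_(m * n), codeword G x -> codeword G y ->
    (forall i j, (i, j) \notin E -> x 0 (pos i j) = y 0 (pos i j)) -> x = y.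

(* The code (row space of G) belongs to C_{m x n}(a,b,h): its parity-check
   matrix is (H_local ; H_global) with H_local a parity-check matrix of
   C_col (x) C_row, C_col an [m, >= m-a] code (generator Gc), C_row an
   [n, >= n-b] code (generator Gr), H_global an arbitrary h x mn matrix. *)
Definition in_topology (K : fieldType) (m n a b h k : nat) (G : 'M[K]_(k, m * n)) : Prop :=
  exists (kc kr : nat) (Gc : 'M[K]_(kc, m)) (Gr : 'M[K]_(kr, n))
         (Hg : 'M[K]_(h, m * n)),
    (m - a <= \rank Gc)%N /\ (n - b <= \rank Gr)%N /\
    forall x : 'rV[K]_(m * n),
      codeword G x <-> (codeword (tensmx Gc Gr) x /\ x *m Hg^T = 0).

Definition correctable (m n a b h : nat) (E : {set 'I_m * 'I_n}) : Prop :=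
  exists (K : finFieldType) (k : nat) (G : 'M[K]_(k, m * n)),
    in_topology a b h G /\ corrects G E.

Definition max_correctable (m n a b h : nat) (E : {set 'I_m * 'I_n}) : Prop :=
  correctable a b h E /\
  forall E' : {set 'I_m * 'I_n}, E \proper E' -> ~ correctable a b h E'.

Definition MR_code (K : fieldType) (m n a b h k : nat) (G : 'M[K]_(k, m * n)) : Prop :=
  in_topology a b h G /\
  forall E : {set 'I_m * 'I_n}, correctable a b h E -> corrects G E.

(* Generator matrix of Gab(N, k, g) over L, an extension of the field F with
   q = #|F| elements: entry (i,j) is g_j^(q^i) (i counted from 0). *)
Definition gab_gen (F : finFieldType) (L : fieldExtType F) (N k : nat)
    (g : 'rV[L]_N) : 'M[L]_(k, N) :=
  \matrix_(i < k, j < N) (g 0 j) ^+ (#|F| ^ i).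

(* Main.v *)
Require Import Defs.
From HB Require Import structures.
From mathcomp Require Import all_boot all_order all_algebra all_field all_fingroup all_solvable.
From mathcomp Require Import mxtens.
Import GRing.Theory.
Local Open Scope ring_scope.

Lemma frob_nat (F : finFieldType) (L : fieldExtType F) (i : nat) :
  [pchar L].-nat (#|F| ^ i)%N.
Proof.
have [p pr pF] := finPcharP F.
have pn : p.-nat #|F|.
  by rewrite -cardsT -pgroupE; exact: abelem_pgroup (fin_ring_pchar_abelem pF).
have pL : p \in [pchar L] by rewrite pchar_lalg.
by rewrite (eq_pnat _ (pcharf_eq pL)) pnatX pn.
Qed.

Lemma frob_F (F : finFieldType) (i : nat) (c : F) : c ^+ (#|F| ^ i)%N = c.
Proof.
elim: i => [|i IH]; first by rewrite expr1.
by rewrite expnS exprM expf_card IH.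
Qed.

Lemma frob_sum (F : finFieldType) (L : fieldExtType F) (N i : nat)
   (c : 'I_N -> F) (g : 'I_N -> L) :
  (\sum_j in_alg L (c j) * g j) ^+ (#|F| ^ i)%N =
  \sum_j in_alg L (c j) * g j ^+ (#|F| ^ i)%N.
Proof.
have q0 : (0 < #|F| ^ i)%N by rewrite expn_gt0 (leq_trans _ (finNzRing_gt1 F)).
rewrite (big_morph (fun x : L => x ^+ (#|F| ^ i)%N) (fun x y => exprDn_pchar x y (@frob_nat F L i))
   (expr0n _ _)) ?eqn0Ngt ?q0 //.
apply: eq_bigr => j _.
by rewrite exprMn -rmorphXn frob_F.
Qed.

Lemma gab_part (F : finFieldType) (L : fieldExtType F) (k k' r0 : nat)
  (g : 'rV[L]_k) (Hg : free [tuple g 0 j | j < k]) (u : 'rV[L]_k')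
  (W : 'M[F]_(r0, k)) (hr : (k' <= \rank W)%N)
  (hW : map_mx (in_alg L) W *m (u *m gab_gen k' g)^T = 0) : u = 0.
Proof.
set q := #|F|. have q1 : (1 < q)%N := finNzRing_gt1 F.
set gam := u *m gab_gen k' g.
have gamE j : gam 0 j = \sum_(i < k') u 0 i * g 0 j ^+ (q ^ i)%N.
  by rewrite !mxE; apply: eq_bigr => i _; rewrite mxE.
pose phi := fun v : 'rV[F]_k => \sum_j in_alg L (v 0 j) * g 0 j.
have phi_inj : injective phi.
  move=> v w e; apply/rowP => j.
  have H : \sum_(j < k) (v - w) 0 j *: [tuple g 0 j | j < k]`_j = 0.
    apply: (etrans (y := phi v - phi w)); last by rewrite e subrr.
    rewrite /phi -sumrB; apply: eq_bigr => l _.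
    by rewrite nth_mktuple !mxE scalerBl !mulr_algl.
  move/freeP: Hg => Hf.
  by have /eqP := Hf (fun j => (v - w) 0 j) H j; rewrite !mxE subr_eq0 => /eqP.
pose P : {poly L} := \sum_(i < k') u 0 i *: 'X^(q ^ i).
have coefP j : P`_j = \sum_(i < k') u 0 i * (j == q ^ i)%N%:R.
  by rewrite coef_sum; apply: eq_bigr => i _; rewrite coefZ coefXn.
have hornP x : P.[x] = \sum_(i < k') u 0 i * x ^+ (q ^ i)%N.
  by rewrite horner_sum; apply: eq_bigr => i _; rewrite hornerZ hornerXn.
apply/rowP => i0; rewrite mxE; apply/eqP/negP => /negP ui0.
have k'0 : (0 < k')%N by apply: leq_ltn_trans (ltn_ord i0).
have P0 : P != 0.
  apply/eqP => /(congr1 (fun p : {poly L} => p`_(q ^ i0)%N)).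
  rewrite coefP coef0 (bigD1 i0) //= eqxx mulr1 big1 ?addr0.
    by move=> e; move: ui0; rewrite e eqxx.
  move=> i ne; rewrite eqn_exp2l // eq_sym.
  by have /negbTE -> : (i : nat) != i0 := ne; rewrite mulr0.
have szP : (size P <= (q ^ k'.-1).+1)%N.
  apply/leq_sizeP => j hj; rewrite coefP big1 // => i _.
  have hi : (q ^ i <= q ^ k'.-1)%N by rewrite leq_exp2l // -ltnS prednK.
  by rewrite gtn_eqF ?mulr0 //; apply: leq_ltn_trans hi hj.
set r := \rank W.
pose rs := [seq phi (w *m row_base W) | w <- enum 'rV[F]_r].
have urs : uniq rs.
  rewrite map_inj_uniq ?enum_uniq // => w1 w2 e.
  exact: (row_free_inj (row_base_free W) (phi_inj _ _ e)).
have szrs : size rs = (q ^ r)%N by rewrite size_map -cardE card_mx mul1n.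
have rrs : all (root P) rs.
  apply/allP => x /mapP [w _ ->]; set v := w *m row_base W.
  have : (v <= W)%MS by rewrite /v -(eq_row_base W) submxMl.
  case/submxP => c ev.
  rewrite /root hornP /phi.
  under eq_bigr do rewrite frob_sum.
  have -> : \sum_(i < k') u 0 i * (\sum_j in_alg L (v 0 j) * g 0 j ^+ (q ^ i)%N)
        = (map_mx (in_alg L) v *m gam^T) 0 0.
    rewrite mxE.
    under eq_bigr do rewrite mulr_sumr.
    rewrite exchange_big /=; apply: eq_bigr => j _.
    rewrite !mxE mulr_sumr; apply: eq_bigr => i _.
    by rewrite mxE mulrCA.
  by rewrite ev map_mxM -mulmxA hW mulmx0 mxE.
have := max_poly_roots P0 rrs urs; rewrite szrs => h.
have : (q ^ r <= q ^ k'.-1)%N by rewrite -ltnS; apply: leq_trans h szP.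
rewrite leq_exp2l // => hr'.
by move: (leq_trans hr hr'); rewrite -subn1 leq_subRL ?addn1 ?ltnn // -/r.
Qed.
Definition Msel {F : fieldType} {m n k : nat} (X : {set 'I_m * 'I_n})
  (G : 'M[F]_(k, m * n)) : 'M[F]_(m * n, k) :=
  \matrix_(p, j) (if mxtens_unindex p \in X then G j p else 0).

Lemma Msel_rank1 (F : fieldType) (m n k : nat) (x : 'I_m * 'I_n)
  (G : 'M[F]_(k, m * n)) : (\rank (Msel [set x] G) <= 1)%N.
Proof.
have -> : Msel [set x] G =
   (delta_mx (mxtens_index x) 0 : 'M_(m * n, 1)) *m \row_j G j (mxtens_index x).
  apply/matrixP => p j; rewrite !mxE big_ord1 !mxE inE.
  have [<-|ne] := eqVneq (mxtens_unindex p) x.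
    by rewrite mxtens_unindexK eqxx mul1r.
  case: eqP => [e|_]; last by rewrite mul0r.
  by move: ne; rewrite e mxtens_indexK eqxx.
by apply: leq_trans (mxrankM_maxl _ _) (rank_leq_col _).
Qed.

Lemma Msel_rank (F : fieldType) (m n k : nat) (I : {set 'I_m * 'I_n})
  (G : 'M[F]_(k, m * n)) : (\rank (Msel I G) <= #|I|)%N.
Proof.
have -> : Msel I G = \sum_(x in I) Msel [set x] G.
  apply/matrixP => p j; rewrite !mxE summxE.
  under eq_bigr do rewrite mxE inE.
  rewrite -big_mkcondr /=.
  case: ifP => pI.
    by rewrite (big_pred1 (mxtens_unindex p)) // => y; rewrite /= eq_sym andb_idl // => /eqP ->.
  by rewrite big_pred0 // => y; apply/andP => -[yI /eqP e]; move: pI; rewrite e yI.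
rewrite -sum1_card.
apply: (big_ind2 (fun (A : 'M_(m * n, k)) (c : nat) => \rank A <= c)%N).
- by rewrite mxrank0.
- by move=> A1 c1 A2 c2 h1 h2; apply: leq_trans (mxrank_add _ _) (leq_add h1 h2).
- by move=> x _; apply: Msel_rank1.
Qed.

Lemma rank_part (F : fieldType) (m n k : nat) (G : 'M[F]_(k, m * n))
  (E I : {set 'I_m * 'I_n}) :
  row_free G -> corrects G E -> I \subset ~: E ->
  (k - #|I| <= \rank (Msel (~: (E :|: I)) G))%N.
Proof.
move=> fG cG sI.
have rS : \rank (Msel (~: E) G) = k.
  rewrite -mxrank_tr; apply/eqP; change (row_free (Msel (~: E) G)^T); rewrite -kermx_eq0; apply/eqP/row_matrixP => r.
  rewrite row0; set v := row r _.
  have hv : v *m (Msel (~: E) G)^T = 0 by rewrite /v -row_mul mulmx_ker row0.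
  have : v *m G = 0 *m G.
    rewrite mul0mx; apply: (cG _ _ (submxMl _ _) (sub0mx _ _)) => i j nE.
    have hv' : (v *m (Msel (~: E) G)^T) 0 (pos i j) = 0 by rewrite hv mxE.
    rewrite [RHS]mxE -hv' !mxE; apply: eq_bigr => l _.
    rewrite !mxE /pos mxtens_indexK inE nE.
    by [].
  by move/(row_free_inj fG).
have eS : Msel (~: E) G = Msel (~: (E :|: I)) G + Msel I G.
  apply/matrixP => p j; rewrite !mxE !inE.
  case: (boolP (mxtens_unindex p \in I)) => pI.
    have := subsetP sI _ pI; rewrite inE => /negbTE ->.
    by rewrite orbT /= add0r.
  by rewrite orbF addr0.
rewrite leq_subLR -{1}rS eS addnC.
apply: leq_trans (mxrank_add _ _) _; apply: leq_add => //; exact: Msel_rank.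
Qed.

Theorem theorem1 (F : finFieldType) (m n a b h : nat)
  (Hma : (a < m)%N) (Hnb : (b < n)%N)
  (Hh : (h <= (m - a) * (n - b) - maxn (m - a) (n - b))%N)
  (Gout : 'M[F]_((m - a) * (n - b), m * n))
  (HGrank : \rank Gout = ((m - a) * (n - b))%N)
  (HMR : MR_code a b 0 Gout)
  (L : fieldExtType F) (s : nat) (Hs : \dim {:L} = s)
  (Hsk : ((m - a) * (n - b) <= s)%N)
  (g : 'rV[L]_((m - a) * (n - b)))
  (Hg : free [tuple g 0 j | j < (m - a) * (n - b)]) :
  forall (E' I : {set 'I_m * 'I_n}),
    max_correctable a b 0 E' ->
    I \subset ~: E' -> #|I| = h ->
    corrects
      (gab_gen ((m - a) * (n - b) - h) g *m map_mx (in_alg L) Gout)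
      (E' :|: I).
Proof.
move=> E' I [cE' _] sI cardI x y cx cy hxy.
have cG : corrects Gout E' := HMR.2 E' cE'.
have fG : row_free Gout by rewrite /row_free HGrank.
have rk := @rank_part F m n _ Gout E' I fG cG sI; rewrite cardI in rk.
have cz : (x - y <= gab_gen ((m - a) * (n - b) - h) g *m map_mx (in_alg L) Gout)%MS.
  by rewrite addmx_sub // eqmx_opp.
case/submxP: cz => u ez.
suff u0 : u = 0 by apply/eqP; rewrite -subr_eq0 ez u0 mul0mx.
apply: (@gab_part F L _ _ _ g Hg u _ rk).
apply/matrixP => p c; rewrite [RHS]mxE.
set gam := u *m _.
case: (boolP (mxtens_unindex p \in ~: (E' :|: I))) => hp; last first.
  rewrite mxE big1 // => j _; rewrite !mxE (negbTE hp) rmorph0 mul0r //.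
have hz : (gam *m map_mx (in_alg L) Gout) 0 p = 0.
  rewrite /gam -mulmxA -ez !mxE.
  move: hp; case e: (mxtens_unindex p) => [i j] hp.
  have pE : p = pos i j by rewrite /pos -e mxtens_unindexK.
  rewrite in_setC in hp.
  by rewrite pE (hxy i j hp) subrr.
rewrite -[RHS]hz !mxE; apply: eq_bigr => j _.
by rewrite /Msel !mxE hp (ord1 c) mulrC.
Qed.
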